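(* The function $f$ on permutations defined by $f(\alpha)=c(\sigma_m^{-1}\alpha)$ for $\alpha\in\mathbb{S}_m$ (the number of faces, i.e. boundary components, of the hypermap of $\alpha$) satisfies the generalized Vassiliev relations in the following strong sense: for every generalized Vassiliev element $E(\gamma,q,v)=\sum_{j\in v}(\alpha_{j-1}-\alpha_j)$, the terms can be matched into pairs $(\alpha_{j-1},\alpha_{j'})$ with opposite signs and $f(\alpha_{j-1})=f(\alpha_{j'})$. In particular, for any function $g$ of one integer variable, the linear extension of $\alpha\mapsto g(f(\alpha))$ vanishes on all generalized Vassiliev elements (so the genus of a hyper chord diagram is a generalized weight system).
   Context: $\sigma_m=(1,\dots,m)$; $c(\beta)$ denotes the number of cycles of a permutation $\beta$. Generalized Vassiliev elements: let $m\ge2$, $\gamma\in\mathbb{S}_{m-1}$, $q\in[m-1]\cup\{*\}$. For $t\in\{0,\dots,m-1\}$ let $\alpha_t\in\mathbb{S}_m$ be obtained by inserting a new point $x$ (free leg) into the line $1<\dots<m-1$ in the gap between $t$ and $t+1$, relabeling all points $1,\dots,m$ in order, letting the permutation act as $\gamma$ on old points except $q\mapsto x\mapsto\gamma(q)$ if $q\ne*$, and $x$ fixed if $q=*$. For a cycle $v$ of $\gamma$, $E(\gamma,q,v)=\sum_{j\in v}(\alpha_{j-1}-\alpha_j)\in\mathbb{C}[\mathbb{S}_m]$. *)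

(* Defs.v *)
From mathcomp Require Import all_boot all_order all_fingroup all_algebra all_field.
Set Implicit Arguments. Unset Strict Implicit. Unset Printing Implicit Defensive.
Import GRing.Theory Num.Theory.
Local Open Scope ring_scope.

(* Conventions: m = n.+1 (so m >= 2 iff 0 < n).  Points 1..m-1 of the paper
   are the ordinals 0..n-1 of 'I_n (paper point p <-> ordinal p-1); points
   1..m are 'I_n.+1.  The "*" value of q is None. *)

Definition sigma (m : nat) : 'S_m := perm (@ordS_inj m).

Definition ncycles (T : finType) (b : {perm T}) : nat := #|porbits b|.

(* f(alpha) = c(sigma_m^{-1} alpha).  Functional composition
   (sigma^{-1} o alpha) is written alpha * sigma^-1 in mathcomp. *)
Definition faces (m : nat) (a : 'S_m) : nat := ncycles (a * (sigma m)^-1).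

(* alpha_t : the new point x sits in the gap t (0 <= t <= m-1), i.e. it
   gets 0-based label t in 'I_n.+1, and an old point i : 'I_n gets label
   lift t i (= i if i < t, i+1 otherwise). *)
Definition alpha_fun n (gamma : 'S_n) (q : option 'I_n) (t : 'I_n.+1)
    (y : 'I_n.+1) : 'I_n.+1 :=
  match unlift t y with
  | None => if q is Some q0 then lift t (gamma q0) else t
  | Some i => if q == Some i then t else lift t (gamma i)
  end.

Lemma alpha_fun_inj n gamma q t : injective (@alpha_fun n gamma q t).
Proof.
move=> y1 y2; rewrite /alpha_fun.
have nl k : (t == lift t k) = false by exact: negbTE (neq_lift t k).
case: (unliftP t y1) => [i1 ->|->]; case: (unliftP t y2) => [i2 ->|->] //;
  case: q => [q0|] /=; try case: eqP => [[e1]|ne1]; try case: eqP => [[e2]|ne2];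
  subst => //; try (by move/eqP; rewrite ?nl // eq_sym nl);
  try (by move/lift_inj/perm_inj ->);
  try (by move/lift_inj/perm_inj => E; subst).
Qed.

Definition alpha n (gamma : 'S_n) (q : option 'I_n) (t : 'I_n.+1) : 'S_n.+1 :=
  perm (@alpha_fun_inj n gamma q t).

(* For 0-based j : 'I_n (paper point j+1) the
   paper's alpha_{(j+1)-1} is alpha (inord j) and alpha_{j+1} is
   alpha (inord j.+1). *)
Definition vassiliev n (gamma : 'S_n) (q : option 'I_n) (v : {set 'I_n})
  : {ffun 'S_n.+1 -> algC} :=
  [ffun b => \sum_(j in v)
      ((b == alpha gamma q (inord j))%:R - (b == alpha gamma q (inord j.+1))%:R)].

Definition linext m (h : 'S_m -> algC) (E : {ffun 'S_m -> algC}) : algC :=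
  \sum_(b : 'S_m) E b * h b.

(* Main.v *)
Require Import Defs.
From mathcomp Require Import all_boot all_order all_fingroup all_algebra all_field.
From mathcomp Require Import zify.
Set Implicit Arguments. Unset Strict Implicit. Unset Printing Implicit Defensive.
Import GRing.Theory.
Local Open Scope group_scope.

Section Lift.
Variable n : nat.
Implicit Types (t : 'I_n.+1) (p : 'S_n).

Lemma lift_permX t p k : (lift_perm t t p) ^+ k = lift_perm t t (p ^+ k).
Proof.
elim: k => [|k IH]; first by rewrite !expg0 lift_perm1.
by rewrite !expgS IH lift_permM.
Qed.

Lemma lift_porbit t p a b :
  (lift t a \in porbit (lift_perm t t p) (lift t b)) = (a \in porbit p b).
Proof.
apply/porbitP/porbitP => -[k Hk]; exists k.
  by move: Hk; rewrite lift_permX lift_perm_lift => /lift_inj.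
by rewrite lift_permX lift_perm_lift Hk.
Qed.

Lemma lift_porbitE t p b :
  porbit (lift_perm t t p) (lift t b) = lift t @: porbit p b.
Proof.
apply/setP => z; case: (unliftP t z) => [a ->|->].
  by rewrite lift_porbit mem_imset //; exact: lift_inj.
apply/idP/idP.
  by move/porbitP => [k]; rewrite lift_permX lift_perm_lift => /eqP; rewrite (negbTE (neq_lift _ _)).
by move/imsetP => [a _ /eqP]; rewrite (negbTE (neq_lift _ _)).
Qed.

Lemma card_lift_porbits t p :
  #|porbits (lift_perm t t p)| = (#|porbits p|).+1.
Proof.
set L := lift_perm t t p.
have E : porbits L = porbit L t |: ((fun X : {set 'I_n} => lift t @: X) @: porbits p).
  apply/setP => S; rewrite !inE; apply/imsetP/idP.
    move=> [z _ ->]; case: (unliftP t z) => [a ->|->]; last by rewrite eqxx.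
    apply/orP; right; rewrite lift_porbitE; apply/imsetP; exists (porbit p a) => //.
    exact: imset_f.
  case/orP => [/eqP ->|/imsetP [S' /imsetP [a _ ->] ->]]; first by exists t.
  by exists (lift t a) => //; rewrite lift_porbitE.
rewrite E cardsU1 card_imset; last exact: (imset_inj (@lift_inj _ t)).
suff -> : (porbit L t \notin (fun X : {set 'I_n} => lift t @: X) @: porbits p) by []. apply/negP => /imsetP [S' _ Ht].
have : t \in porbit L t by exact: porbit_id.
by rewrite Ht => /imsetP [a _ /eqP]; rewrite (negbTE (neq_lift _ _)).
Qed.
End Lift.

Lemma notin_fixed (T : finType) (s : {perm T}) x y :
  s x = x -> y != x -> (x \in porbit s y) = false.
Proof.
move=> sx ne; apply/negbTE; apply/negP; rewrite porbit_sym => /porbitP [k].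
have -> : (s ^+ k) x = x by elim: k => [|k IH]; rewrite ?expg0 ?perm1 // expgSr permM IH sx.
by move/eqP; rewrite (negbTE ne).
Qed.


Section Sig.
Variables (n : nat) (Hn : (0 < n)%N).

Definition bt (t : 'I_n.+1) : 'I_n := Ordinal (ltn_pmod t Hn).

Lemma sigma_t t : sigma n.+1 t = lift t (bt t).
Proof.
apply/val_inj; rewrite permE /= /bump.
have := ltn_ord t; case: (ltnP t n) => h1 h2.
  by rewrite !modn_small // leqnn.
have -> : nat_of_ord t = n by lia.
by rewrite !modnn; lia.
Qed.

Lemma ordS_val m (w : 'I_m) : (ordS w : nat) = if w.+1 == m then 0%N else w.+1.
Proof.
rewrite /=; case: eqP => [->|h]; first by rewrite modnn.
by rewrite modn_small //; have := ltn_ord w; lia.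
Qed.

Lemma bt_val t : (bt t : nat) = if t == n :> nat then 0%N else t.
Proof.
rewrite /=; case: eqP => [->|h]; first by rewrite modnn.
by rewrite modn_small //; have := ltn_ord t; lia.
Qed.

Ltac destr := repeat match goal with
  | |- context [if ?c then _ else _] => let e := fresh "e" in destruct c eqn:e
  | H : context [if ?c then _ else _] |- _ => let e := fresh "e" in destruct c eqn:e
  end.

Lemma modn_le a m : (0 < m)%N -> (a <= m)%N -> a %% m = if a == m then 0%N else a.
Proof. move=> h1 h2; case: eqP => [->|h]; [by rewrite modnn | rewrite modn_small //; lia]. Qed.

Lemma sigma_lift t u : sigma n.+1 (lift t u) =
  if sigma n u == bt t then t else lift t (sigma n u).
Proof.
rewrite !permE; have Ht := ltn_ord t; have Hu := ltn_ord u.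
case: eqP => [E|/eqP E]; apply/val_inj; move: E; rewrite -?val_eqE;
  try move=> /(congr1 val); rewrite /= /bump.
all: rewrite (modn_le (a := u.+1)) // (modn_le (a := t)) // ?(modn_le (a := ((t <= u) + u).+1)) //; try lia.
all: destr; lia.
Qed.
End Sig.

Lemma tperm_3 (T : finType) (a b c : T) : a != b -> a != c -> b != c ->
  tperm a b * tperm a c = tperm a c * tperm b c.
Proof.
move=> ab ac bc; apply/permP => z; rewrite !permM.
have nab : b != a by rewrite eq_sym.
have nac : c != a by rewrite eq_sym.
have nbc : c != b by rewrite eq_sym.
case: (z =P a) => [->|/eqP za].
  by rewrite tpermL (tpermD ab nbc) tpermL tpermR.
case: (z =P b) => [->|/eqP zb].
  by rewrite tpermR tpermL (tpermD ab nbc) tpermL.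
case: (z =P c) => [->|/eqP zc].
  by rewrite (tpermD ac bc) tpermR (tpermD nab nac).
rewrite eq_sym in za; rewrite eq_sym in zb; rewrite eq_sym in zc.
by rewrite !tpermD.
Qed.

Section Main.
Variables (n : nat) (Hn : (0 < n)%N) (gamma : 'S_n) (q : option 'I_n).

Definition pp := gamma * (sigma n)^-1.
Definition GG (t : 'I_n.+1) := lift_perm t t gamma.
Definition y0 (t : 'I_n.+1) := gamma^-1 (bt Hn t).

Lemma alphaE t : alpha gamma q t =
  (if q is Some q0 then tperm t (lift t q0) else 1) * GG t.
Proof.
apply/permP => z; rewrite permM permE /alpha_fun /GG.
case: (unliftP t z) => [i ->|->]; rewrite ?liftK ?unlift_none.
  case: q => [q0|]; last by rewrite perm1 lift_perm_lift.
  case: eqP => [[->]|ne]; first by rewrite tpermR lift_perm_id.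
  rewrite tpermD ?lift_perm_lift ?neq_lift //.
  by apply/eqP => /lift_inj E; apply: ne; rewrite E.
case: q => [q0|]; last by rewrite perm1 lift_perm_id.
by rewrite tpermL lift_perm_lift.
Qed.

Lemma GE t : GG t = tperm t (lift t (y0 t)) * lift_perm t t pp * sigma n.+1.
Proof.
apply/permP => z; rewrite !permM /GG.
case: (unliftP t z) => [i ->|->].
  case: (i =P y0 t) => [->|ne].
    by rewrite tpermR lift_perm_id lift_perm_lift sigma_t /y0 permKV.
  have h1 : t != lift t i := neq_lift _ _.
  have h2 : lift t (y0 t) != lift t i by apply/eqP => /lift_inj E; apply: ne; rewrite E.
  rewrite (tpermD h1 h2).
  rewrite !lift_perm_lift sigma_lift /pp permM permKV.
  case: eqP => // E; case: ne; by rewrite /y0 -E permK.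
by rewrite tpermL !lift_perm_lift lift_perm_id sigma_lift /pp permM permKV /y0 permKV eqxx.
Qed.

Definition LL t := lift_perm t t pp.

Lemma facesE t : faces (alpha gamma q t) = #|porbits
  ((if q is Some q0 then tperm t (lift t q0) else 1) * (tperm t (lift t (y0 t)) * LL t))|.
Proof. by rewrite /faces /ncycles alphaE GE /LL !mulgA mulgK. Qed.

Lemma LL_fix t : LL t t = t.
Proof. exact: lift_perm_id. Qed.

Lemma card_tL t : #|porbits (tperm t (lift t (y0 t)) * LL t)| = #|porbits pp|.
Proof.
have := porbits_mul_tperm (LL t) t (lift t (y0 t)).
rewrite /= notin_fixed ?LL_fix; last by rewrite eq_sym neq_lift.
rewrite neq_lift.
rewrite /= /LL card_lift_porbits addn2 addn1.
by move/succn_inj/succn_inj.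
done.
Qed.

Lemma faces_None t : q = None -> faces (alpha gamma q t) = #|porbits pp|.
Proof. by move=> hq; rewrite facesE hq mul1g card_tL. Qed.

Lemma faces_Some t q0 : q = Some q0 ->
  faces (alpha gamma q t) + (q0 \notin porbit pp (y0 t)).*2 = (#|porbits pp|).+1.
Proof.
move=> hq; rewrite facesE hq.
case: (q0 =P y0 t) => [->|ne].
  by rewrite mulgA tperm2 mul1g porbit_id /LL card_lift_porbits addn0.
have ne' : lift t q0 != lift t (y0 t) by apply/eqP => /lift_inj.
rewrite mulgA tperm_3 ?neq_lift // -mulgA.
have := porbits_mul_tperm (tperm (lift t q0) (lift t (y0 t)) * LL t) t (lift t (y0 t)).
rewrite /= notin_fixed; first last.
- by rewrite eq_sym neq_lift.
- by rewrite permM tpermD ?LL_fix // ?neq_lift // eq_sym ?neq_lift.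
rewrite neq_lift /= => H1.
have := porbits_mul_tperm (LL t) (lift t q0) (lift t (y0 t)).
rewrite /= ne' /LL lift_porbit card_lift_porbits.
rewrite /LL in H1; rewrite addn1 addn2 in H1; move/succn_inj: H1 => H1.
rewrite -H1 addSn addn1 => /succn_inj.
by [].
Qed.
End Main.


Lemma porbit_inv (T : finType) (s : {perm T}) x : porbit s (s^-1 x) = porbit s x.
Proof.
by rewrite -(porbitV s (s^-1 x)) -(porbitV s x); have := porbit_perm s^-1 1 x; rewrite expg1.
Qed.

Lemma key n (Hn : (0 < n)%N) (gamma : 'S_n) q (j : 'I_n) :
  faces (alpha gamma q (inord j)) = faces (alpha gamma q (inord (gamma^-1 j).+1)).
Proof.
have ltj : (j < n.+1)%N by apply: leq_trans (ltn_ord j) _.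
have ltj' : ((gamma^-1 j).+1 < n.+1)%N by rewrite ltnS ltn_ord.
have b1 : bt Hn (inord j) = j.
  by apply/val_inj; rewrite /= inordK // modn_small.
have b2 : bt Hn (inord (gamma^-1 j).+1) = sigma n (gamma^-1 j).
  by apply/val_inj; rewrite [sigma n _]permE /= inordK.
have E : porbit (pp gamma) (y0 Hn gamma (inord j)) =
         porbit (pp gamma) (y0 Hn gamma (inord (gamma^-1 j).+1)).
  have -> : y0 Hn gamma (inord j) = pp gamma (y0 Hn gamma (inord (gamma^-1 j).+1)).
    by rewrite /y0 b1 b2 /pp permM permKV permK.
  by have := porbit_perm (pp gamma) 1 (y0 Hn gamma (inord (gamma^-1 j).+1)); rewrite expg1.
case: q => [q0|].
  have h1 := faces_Some Hn gamma (inord j) (erefl (Some q0)).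
  have h2 := faces_Some Hn gamma (inord (gamma^-1 j).+1) (erefl (Some q0)).
  by apply/eqP; rewrite -(eqn_add2r (q0 \notin porbit (pp gamma) (y0 Hn gamma (inord j))).*2) {2}E h1 h2.
by rewrite !(faces_None Hn gamma _ (erefl None)).
Qed.

Local Open Scope ring_scope.

Theorem mainTheorem4 (n : nat) (Hn : (0 < n)%N) (gamma : 'S_n)
    (q : option 'I_n) (i : 'I_n) :
  let v := porbit gamma i in
  (exists pi : {perm 'I_n},
     forall j, j \in v ->
       pi j \in v /\
       faces (alpha gamma q (inord j)) = faces (alpha gamma q (inord (pi j).+1)))
  /\
  (forall g : int -> algC,
     linext (fun a => g (faces a)%:Z) (vassiliev gamma q v) = 0).
Proof.
move=> v.
have memv j : ((gamma^-1)%g j \in v) = (j \in v).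
  by rewrite /v -!eq_porbit_mem porbit_inv.
split.
  by exists (gamma^-1)%g => j hj; split; [rewrite memv | exact: key].
move=> g; rewrite /linext.
set h := fun a : 'S_n.+1 => g (faces a)%:Z.
have d1 (a : 'S_n.+1) : \sum_b ((b == a)%:R * h b) = h a :> algC.
  rewrite (bigD1 a) //= eqxx mul1r big1 ?addr0 // => b /negbTE ->.
  by rewrite mul0r.
rewrite (eq_bigr (fun b => \sum_(j in v) (((b == alpha gamma q (inord j))%:R -
      (b == alpha gamma q (inord j.+1))%:R) * h b))); last first.
  by move=> b _; rewrite ffunE mulr_suml.
rewrite exchange_big /=.
rewrite (eq_bigr (fun j : 'I_n => h (alpha gamma q (inord j)) - h (alpha gamma q (inord j.+1)))); last first.
  by move=> j _; rewrite -d1 -d1 -sumrB; apply: eq_bigr => b _; rewrite mulrBl.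
rewrite sumrB; apply/eqP; rewrite subr_eq0; apply/eqP.
rewrite (eq_bigr (fun j : 'I_n => h (alpha gamma q (inord ((gamma^-1)%g j).+1)))); last first.
  by move=> j _; rewrite /h key.
rewrite [RHS](reindex_inj (@perm_inj _ (gamma^-1)%g)) /=.
by apply: eq_bigl => j; rewrite memv.
Qed.
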